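(* Let $2\le n\le\infty$, $r\ge1$ and $p,q\in\mathbb Z$. The pushout in $\mathrm{Ch}_n$ of the diagram $0\leftarrow\mathcal ZW^n_r(p,q)\xrightarrow{\iota_r}\mathcal BW^n_r(p,q-1)$ (i.e. the cokernel of $\iota_r$) is isomorphic to $\mathcal ZW^n_r(p+r-1,q+r-2)$.
   Context: Throughout, $R$ is a commutative unital ring. For $1\le n\le\infty$, an $n$-multicomplex is a $\mathbb Z\times\mathbb Z$-bigraded $R$-module $A=\{A^{p,q}\}$ with $R$-linear maps $d_i\colon A\to A$ ($i\ge0$) of bidegree $(-i,1-i)$ such that $\sum_{i+j=l}(-1)^id_id_j=0$ for all $l\ge0$, and $d_i=0$ for all $i\ge n$ (no vanishing condition when $n=\infty$). Morphisms are bidegree $(0,0)$ $R$-linear maps commuting with all $d_i$; the category is denoted $\mathrm{Ch}_n$. Representing objects: $\mathbb D^n(p,q)$ is the free $n$-multicomplex on one generator in bidegree $(p,q)$. $\mathcal ZW^n_0(p,q)=\mathbb D^n(p,q)$ with generator $a_0$. $\mathcal ZW^n_1(p,q)$ is the pushout in $\mathrm{Ch}_n$ of $0\leftarrow\mathbb D^n(p,q+1)\to\mathbb D^n(p,q)$, the right map sending the generator to $d_0a_0$. For $r\ge2$, $\mathcal ZW^n_r(p,q)$ is the pushout in $\mathrm{Ch}_n$ of $\mathcal ZW^n_{r-1}(p,q)\leftarrow\mathbb D^n(p-r+1,q-r+2)\to\mathbb D^n(p-r+1,q-r+1)$, where, writing $x$ for the generator of the middle object and $a_{r-1}$ for that of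 the right one, the left map sends $x\mapsto\sum_{i=1}^{r-1}(-1)^{i+1}d_ia_{r-1-i}$ and the right map sends $x\mapsto d_0a_{r-1}$; the images of $a_0,\dots,a_{r-1}$ in the pushout are still denoted $a_0,\dots,a_{r-1}$ ($a_i$ has bidegree $(p-i,q-i)$). $\mathcal BW^n_0(p,q-1)=0$, $\mathcal BW^n_1(p,q-1)=\mathbb D^n(p,q-1)$, and for $r\ge2$, $\mathcal BW^n_r(p,q-1)=\mathcal ZW^n_{r-1}(p+r-1,q+r-2)\oplus\mathbb D^n(p,q-1)\oplus\mathcal ZW^n_{r-1}(p-1,q-1)$. The morphism $\iota_r\colon\mathcal ZW^n_r(p,q)\to\mathcal BW^n_r(p,q-1)$: $\iota_0=0$; $\iota_1(a_0)=d_0e$ where $e$ generates $\mathbb D^n(p,q-1)$; for $r\ge2$, writing $b_0,\dots,b_{r-2}$ for the generators of $\mathcal ZW^n_{r-1}(p+r-1,q+r-2)$, $e$ for the generator of $\mathbb D^n(p,q-1)$ and $c_0,\dots,c_{r-2}$ for the generators of $\mathcal ZW^n_{r-1}(p-1,q-1)$, $\iota_r(a_j)=d_je+(-1)^j\sum_{i=j+1}^{r+j-1}(-1)^id_ib_{r+j-1-i}+c_{j-1}$ for $0\le j\le r-1$, with $c_{-1}:=0$. *)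

(* Defs.v *)
From HB Require Import structures.
From mathcomp Require Import all_boot all_order all_algebra.
Set Implicit Arguments. Unset Strict Implicit. Unset Printing Implicit Defensive.
Import Order.TTheory GRing.Theory Num.Theory.
Local Open Scope ring_scope.

Inductive ninf := NFin of nat | NInf.

(* d_i = 0 is required for i >= n *)
Definition ninf_le (n : ninf) (i : nat) : bool :=
  match n with NFin N => (N <= i)%N | NInf => false end.

Definition ninf_ge2 (n : ninf) : bool :=
  match n with NFin N => (2 <= N)%N | NInf => true end.

Section Defs.
Variable R : comPzRingType.

(* Transport between bidegrees that are (provably) equal; it returns 0 when
   the bidegrees differ, which never happens in the uses below (all uses
   are between equal bidegrees, e.g. (p - j) - i and p - (i + j)). *)
Definition mcast (A : int -> int -> lmodType R) (a b a' b' : int) (x : A a b)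
  : A a' b' :=
  match @eqP _ a a', @eqP _ b b' with
  | ReflectT e1, ReflectT e2 =>
      match e1 in _ = a1, e2 in _ = b1 return A a1 b1 with
      | erefl, erefl => x end
  | _, _ => 0
  end.
Arguments mcast A {a b a' b'} x.

(* n-multicomplexes: bigraded R-modules A^{p,q} with R-linear maps
   d_i : A^{p,q} -> A^{p-i, q+1-i}, with sum_{i+j=l} (-1)^i d_i d_j = 0,
   and d_i = 0 for i >= n. *)
Record mcx (n : ninf) := Mcx {
  mobj :> int -> int -> lmodType R;
  md : forall (i : nat) (p q : int),
         {linear mobj p q -> mobj (p - i%:Z) (q + 1 - i%:Z)};
  md_rel : forall (l : nat) (p q : int) (x : mobj p q),
    \sum_(j < l.+1)
       (-1) ^+ (l - j) *: mcast mobj (a' := p - l%:Z) (b' := q + 2 - l%:Z)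
          (md (l - j) _ _ (md j p q x)) = 0;
  md_vanish : forall (i : nat) (p q : int) (x : mobj p q),
    ninf_le n i -> md i p q x = 0
}.

Definition dd (n : ninf) (A : mcx n) (i : nat) {p q : int} (x : A p q) :=
  md A i p q x.

Record mhom (n : ninf) (A B : mcx n) := Mhom {
  mfun : forall p q : int, {linear A p q -> B p q};
  mfun_comm : forall (i : nat) (p q : int) (x : A p q),
    mfun _ _ (md A i p q x) = md B i p q (mfun p q x)
}.

Definition app (n : ninf) (A B : mcx n) (f : mhom A B) {p q : int} (x : A p q)
  : B p q := mfun f p q x.

Definition meq (n : ninf) (A B : mcx n) (f g : mhom A B) : Prop :=
  forall p q (x : A p q), app f x = app g x.

Definition is_free (n : ninf) (A : mcx n) (p q : int) (g : A p q) : Prop :=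
  forall (B : mcx n) (b : B p q),
    exists f : mhom A B, app f g = b /\
      forall f' : mhom A B, app f' g = b -> meq f' f.

Definition is_zero (n : ninf) (O : mcx n) : Prop :=
  forall p q (x : O p q), x = 0.

Definition is_pushout (n : ninf) (C X Y P : mcx n)
    (f : mhom C X) (g : mhom C Y) (i : mhom X P) (j : mhom Y P) : Prop :=
  (forall p q (x : C p q), app i (app f x) = app j (app g x)) /\
  forall (A : mcx n) (u : mhom X A) (v : mhom Y A),
    (forall p q (x : C p q), app u (app f x) = app v (app g x)) ->
    exists h : mhom P A,
      (forall p q (x : X p q), app h (app i x) = app u x) /\
      (forall p q (y : Y p q), app h (app j y) = app v y) /\
      forall h' : mhom P A,
        (forall p q (x : X p q), app h' (app i x) = app u x) ->
        (forall p q (y : Y p q), app h' (app j y) = app v y) -> meq h' h.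

Definition is_coprod3 (n : ninf) (X1 X2 X3 B : mcx n)
    (u1 : mhom X1 B) (u2 : mhom X2 B) (u3 : mhom X3 B) : Prop :=
  forall (A : mcx n) (h1 : mhom X1 A) (h2 : mhom X2 A) (h3 : mhom X3 A),
    exists h : mhom B A,
      (forall p q (x : X1 p q), app h (app u1 x) = app h1 x) /\
      (forall p q (x : X2 p q), app h (app u2 x) = app h2 x) /\
      (forall p q (x : X3 p q), app h (app u3 x) = app h3 x) /\
      forall h' : mhom B A,
        (forall p q (x : X1 p q), app h' (app u1 x) = app h1 x) ->
        (forall p q (x : X2 p q), app h' (app u2 x) = app h2 x) ->
        (forall p q (x : X3 p q), app h' (app u3 x) = app h3 x) -> meq h' h.

Definition gens (n : ninf) (Z : mcx n) (p q : int) :=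
  forall k : nat, Z (p - k%:Z) (q - k%:Z).

(* is_ZW r p q Z a : Z is ZW^n_r(p,q), built by the iterated pushouts of
   the paper, with a_0, ..., a_{r-1} the (images of the) generators. *)
Fixpoint is_ZW (n : ninf) (r : nat) (p q : int) (Z : mcx n) (a : gens Z p q)
    {struct r} : Prop :=
  match r with
  | 0%N => is_free (a 0%N)
  | 1%N =>
      (* pushout of 0 <- D(p,q+1) -> D(p,q), generator |-> d_0 a_0 *)
      exists (D1 : mcx n) (x : D1 p (q + 1)), is_free x /\
      exists (D0 : mcx n) (e : D0 (p - 0%:Z) (q - 0%:Z)), is_free e /\
      exists (O : mcx n), is_zero O /\
      exists (f : mhom D1 O) (g : mhom D1 D0) (i : mhom O Z) (j : mhom D0 Z),
        app g x = mcast D0 (dd 0 e) /\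
        is_pushout f g i j /\ app j e = a 0%N
  | k.+1 =>
      (* r = k+1 >= 2 : pushout of
         ZW_{r-1}(p,q) <- D(p-r+1,q-r+2) -> D(p-r+1,q-r+1) *)
      exists (Y : mcx n) (b : gens Y p q), @is_ZW n k p q Y b /\
      exists (Dx : mcx n) (x : Dx (p - k%:Z) (q - k%:Z + 1)), is_free x /\
      exists (Da : mcx n) (e : Da (p - k%:Z) (q - k%:Z)), is_free e /\
      exists (f : mhom Dx Y) (g : mhom Dx Da) (i : mhom Y Z) (j : mhom Da Z),
        app f x = \sum_(1 <= i0 < k.+1)
                     (-1) ^+ i0.+1 *: mcast Y (dd i0 (b (k - i0)%N)) /\
        app g x = mcast Da (dd 0 e) /\
        is_pushout f g i j /\
        (forall m : nat, (m < k)%N -> app i (b m) = a m) /\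
        app j e = a k
  end.
Arguments is_ZW {n} r p q Z a.

(* is_BW_iota r p q Z a B iota : B is BW^n_r(p,q-1) and iota : Z -> B is the
   morphism iota_r of the paper (Z being ZW^n_r(p,q) with generators a). *)
Definition is_BW_iota (n : ninf) (r : nat) (p q : int) (Z : mcx n)
    (a : gens Z p q) (B : mcx n) (iota : mhom Z B) : Prop :=
  match r with
  | 0%N => is_zero B
  | 1%N =>
      exists e : B p (q - 1), is_free e /\
        app iota (a 0%N) = mcast B (dd 0 e)
  | _ =>
      exists (Zb : mcx n) (bg : gens Zb (p + r%:Z - 1) (q + r%:Z - 2)),
        is_ZW r.-1 (p + r%:Z - 1) (q + r%:Z - 2) Zb bg /\
      exists (De : mcx n) (e : De p (q - 1)), is_free e /\
      exists (Zc : mcx n) (cg : gens Zc (p - 1) (q - 1)),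
        is_ZW r.-1 (p - 1) (q - 1) Zc cg /\
      exists (u1 : mhom Zb B) (u2 : mhom De B) (u3 : mhom Zc B),
        is_coprod3 u1 u2 u3 /\
        forall j : nat, (j < r)%N ->
          app iota (a j) =
            mcast B (dd j (app u2 e))
            + (-1) ^+ j *: \sum_(j.+1 <= i < r + j)
                 (-1) ^+ i *: mcast B (dd i (app u1 (bg (r + j - 1 - i)%N)))
            + match j with
              | 0%N => 0
              | j'.+1 => mcast B (app u3 (cg j'))
              end
  end.
Arguments is_BW_iota {n} r p q Z a B iota.

Definition mcx_iso (n : ninf) (A B : mcx n) : Prop :=
  exists (f : mhom A B) (g : mhom B A),
    (forall p q (x : A p q), app g (app f x) = x) /\
    (forall p q (y : B p q), app f (app g y) = y).

End Defs.
Arguments mcast {R} A {a b a' b'} x.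
Arguments is_ZW {R n} r p q Z a.
Arguments is_BW_iota {R n} r p q Z a B iota.

(* Main.v *)
Require Import Defs.
From HB Require Import structures.
From mathcomp Require Import all_boot all_order all_algebra zify.
Set Implicit Arguments. Unset Strict Implicit. Unset Printing Implicit Defensive.
Import Order.TTheory GRing.Theory Num.Theory.
Local Open Scope ring_scope.

Section Infra.
Variable R : comPzRingType.
Variable n : ninf.
Implicit Types A B C : mcx R n.

Lemma mcast_id A a b (x : A a b) : mcast A (a':=a) (b':=b) x = x.
Proof.
rewrite /mcast; case: eqP => // e1; case: eqP => // e2.
by rewrite (eq_irrelevance e1 erefl) (eq_irrelevance e2 erefl).
Qed.

Lemma mcast_neq A a b a' b' (x : A a b) : ~ (a = a' /\ b = b') -> mcast A (a':=a') (b':=b') x = 0.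
Proof.
move=> H; rewrite /mcast; case: eqP => // e1; case: eqP => // e2; by case: H.
Qed.

Lemma mcastK A a b a' b' a'' b'' (x : A a b) : a = a' -> b = b' ->
  mcast A (a':=a'') (b':=b'') (mcast A (a':=a') (b':=b') x) = mcast A x.
Proof. by move=> e1 e2; case: a' / e1; case: b' / e2; rewrite mcast_id. Qed.

Lemma mcastK' A a b a' b' (x : A a b) : a = a' -> b = b' ->
  mcast A (a':=a) (b':=b) (mcast A (a':=a') (b':=b') x) = x.
Proof. by move=> e1 e2; rewrite mcastK // mcast_id. Qed.

Lemma mcastD A a b a' b' (x y : A a b) :
  mcast A (a':=a') (b':=b') (x + y) = mcast A x + mcast A y.
Proof.
case: (eqVneq a a') => [e1|n1]; last by rewrite !mcast_neq ?addr0 //; case=> /eqP; rewrite (negbTE n1).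
case: (eqVneq b b') => [e2|n2]; last by rewrite !mcast_neq ?addr0 //; case=> _ /eqP; rewrite (negbTE n2).
by case: a' / e1; case: b' / e2; rewrite !mcast_id.
Qed.

Lemma mcastZ A a b a' b' c (x : A a b) :
  mcast A (a':=a') (b':=b') (c *: x) = c *: mcast A x.
Proof.
case: (eqVneq a a') => [e1|n1]; last by rewrite !mcast_neq ?scaler0 //; case=> /eqP; rewrite (negbTE n1).
case: (eqVneq b b') => [e2|n2]; last by rewrite !mcast_neq ?scaler0 //; case=> _ /eqP; rewrite (negbTE n2).
by case: a' / e1; case: b' / e2; rewrite !mcast_id.
Qed.

Lemma mcastN A a b a' b' (x : A a b) :
  mcast A (a':=a') (b':=b') (- x) = - mcast A x.
Proof. by rewrite -scaleN1r mcastZ scaleN1r. Qed.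

Lemma mcast0 A a b a' b' : mcast A (a':=a') (b':=b') (0 : A a b) = 0.
Proof. by rewrite -(scale0r (0 : A a b)) mcastZ scale0r. Qed.

Lemma mcast_sum A a b a' b' (I : Type) (s : seq I) (P : pred I) (F : I -> A a b) :
  mcast A (a':=a') (b':=b') (\sum_(k <- s | P k) F k) = \sum_(k <- s | P k) mcast A (F k).
Proof.
elim: s => [|x s IH]; first by rewrite !big_nil mcast0.
rewrite !big_cons; case: (P x); by rewrite ?mcastD IH.
Qed.

Lemma app_mcast A B (h : mhom A B) a b a' b' (x : A a b) :
  app h (mcast A (a':=a') (b':=b') x) = mcast B (app h x).
Proof.
case: (eqVneq a a') => [e1|n1]; last by rewrite !mcast_neq /app ?raddf0 //; case=> /eqP; rewrite (negbTE n1).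
case: (eqVneq b b') => [e2|n2]; last by rewrite !mcast_neq /app ?raddf0 //; case=> _ /eqP; rewrite (negbTE n2).
by case: a' / e1; case: b' / e2; rewrite !mcast_id.
Qed.

Lemma dd_mcast A k a b a' b' (x : A a b) :
  dd k (mcast A (a':=a') (b':=b') x) = mcast A (dd k x).
Proof.
case: (eqVneq a a') => [e1|n1].
  case: (eqVneq b b') => [e2|n2].
    by case: a' / e1; case: b' / e2; rewrite !mcast_id.
  rewrite !mcast_neq /dd ?raddf0 //.
    by case=> _ /addIr /addIr /eqP; rewrite (negbTE n2).
  by case=> _ /eqP; rewrite (negbTE n2).
rewrite !mcast_neq /dd ?raddf0 //.
  by case=> /addIr /eqP; rewrite (negbTE n1).
by case=> /eqP; rewrite (negbTE n1).
Qed.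


Lemma mcomp_comm A B C (g : mhom B C) (f : mhom A B) (i : nat) (p q : int) (x : A p q) :
  (mfun g _ _ \o mfun f _ _) (md A i p q x) = md C i p q ((mfun g p q \o mfun f p q) x).
Proof. by rewrite /= mfun_comm mfun_comm. Qed.

Definition mcomp A B C (g : mhom B C) (f : mhom A B) : mhom A C :=
  @Mhom R n A C (fun p q => (mfun g p q \o mfun f p q : {linear _ -> _})) (mcomp_comm g f).

Lemma app_comp A B C (g : mhom B C) (f : mhom A B) p q (x : A p q) :
  app (mcomp g f) x = app g (app f x).
Proof. by []. Qed.

Lemma mzero_comm A B (i : nat) (p q : int) (x : A p q) :
  (\0 : A _ _ -> B _ _) (md A i p q x) = md B i p q ((\0 : A p q -> B p q) x).
Proof. by rewrite /= raddf0. Qed.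

Definition mzero A B : mhom A B :=
  @Mhom R n A B (fun p q => (\0 : {linear _ -> _})) (@mzero_comm A B).

Lemma app_zero A B p q (x : A p q) : app (mzero A B) x = 0.
Proof. by []. Qed.

Definition mid A : mhom A A :=
  @Mhom R n A A (fun p q => (idfun : {linear _ -> _})) (fun i p q x => erefl).

Lemma app_id A p q (x : A p q) : app (mid A) x = x.
Proof. by []. Qed.

Lemma app_dd A B (h : mhom A B) k p q (x : A p q) : app h (dd k x) = dd k (app h x).
Proof. exact: mfun_comm. Qed.

Lemma free_uniq A p q (g : A p q) : is_free g ->
  forall B (h1 h2 : mhom A B), app h1 g = app h2 g -> meq h1 h2.
Proof.
move=> Hf B h1 h2 E; have [h [_ Hu]] := Hf B (app h1 g).
move=> p' q' x; by rewrite (Hu h1 erefl) (Hu h2 (esym E)).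
Qed.

Lemma po_uniq C X Y P (f : mhom C X) (g : mhom C Y) (i : mhom X P) (j : mhom Y P) :
  is_pushout f g i j -> forall A (h1 h2 : mhom P A),
  (forall p q (x : X p q), app h1 (app i x) = app h2 (app i x)) ->
  (forall p q (y : Y p q), app h1 (app j y) = app h2 (app j y)) -> meq h1 h2.
Proof.
case=> Hc Hu A h1 h2 E1 E2.
have [h [H1 [H2 H3]]] : exists h : mhom P A,
   (forall p q (x : X p q), app h (app i x) = app (mcomp h1 i) x) /\
   (forall p q (y : Y p q), app h (app j y) = app (mcomp h1 j) y) /\
   forall h' : mhom P A,
     (forall p q (x : X p q), app h' (app i x) = app (mcomp h1 i) x) ->
     (forall p q (y : Y p q), app h' (app j y) = app (mcomp h1 j) y) -> meq h' h.
  by apply: Hu => p q x; rewrite !app_comp Hc.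
have F1 := H3 h1 (fun _ _ _ => erefl) (fun _ _ _ => erefl).
have F2 : meq h2 h by apply: H3 => p q x; rewrite app_comp ?E1 ?E2.
by move=> p q x; rewrite F1 F2.
Qed.

Lemma coprod_uniq X1 X2 X3 B (u1 : mhom X1 B) (u2 : mhom X2 B) (u3 : mhom X3 B) :
  is_coprod3 u1 u2 u3 -> forall A (h1 h2 : mhom B A),
  (forall p q (x : X1 p q), app h1 (app u1 x) = app h2 (app u1 x)) ->
  (forall p q (x : X2 p q), app h1 (app u2 x) = app h2 (app u2 x)) ->
  (forall p q (x : X3 p q), app h1 (app u3 x) = app h2 (app u3 x)) -> meq h1 h2.
Proof.
move=> Hc A h1 h2 E1 E2 E3.
have [h [_ [_ [_ H]]]] := Hc A (mcomp h1 u1) (mcomp h1 u2) (mcomp h1 u3).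
have F1 := H h1 (fun _ _ _ => erefl) (fun _ _ _ => erefl) (fun _ _ _ => erefl).
have F2 : meq h2 h by apply: H => p q x; rewrite app_comp ?E1 ?E2 ?E3.
by move=> p q x; rewrite F1 F2.
Qed.


Lemma appD A B (h : mhom A B) p q (x y : A p q) : app h (x + y) = app h x + app h y.
Proof. exact: raddfD. Qed.
Lemma appZ A B (h : mhom A B) p q c (x : A p q) : app h (c *: x) = c *: app h x.
Proof. exact: linearZ. Qed.
Lemma appN A B (h : mhom A B) p q (x : A p q) : app h (- x) = - app h x.
Proof. exact: raddfN. Qed.
Lemma app0 A B (h : mhom A B) p q : app h (0 : A p q) = 0.
Proof. exact: raddf0. Qed.
Lemma app_sum A B (h : mhom A B) p q (I : Type) (s : seq I) (Pr : pred I) (F : I -> A p q) :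
  app h (\sum_(k <- s | Pr k) F k) = \sum_(k <- s | Pr k) app h (F k).
Proof. exact: raddf_sum. Qed.

Definition relk A P Q (z : gens A P Q) (k : nat) : Prop :=
  mcast A (a' := P - k%:Z) (b' := Q - k%:Z + 1) (dd 0 (z k))
  = \sum_(1 <= i < k.+1) (-1) ^+ i.+1 *: mcast A (dd i (z (k - i)%N)).

Lemma relk_map A B (h : mhom A B) P Q (z : gens A P Q) (w : gens B P Q) k :
  (forall m, (m <= k)%N -> app h (z m) = w m) -> relk z k -> relk w k.
Proof.
move=> Hm H; rewrite /relk -Hm // -app_dd.
rewrite -(app_mcast h) H app_sum; apply: eq_big_nat => i /andP[i1 i2].
by rewrite appZ app_mcast app_dd Hm // leq_subr.
Qed.

Lemma mcast_tr A a b a1 b1 a2 b2 (x : A a b) : a = a1 -> b = b1 -> a1 = a2 -> b1 = b2 ->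
  mcast A (a' := a2) (b' := b2) x = mcast A (mcast A (a' := a1) (b' := b1) x).
Proof. by move=> e1 e2 _ _; rewrite mcastK. Qed.

Lemma ZW_univ r P Q Z (a : gens Z P Q) : (0 < r)%N -> is_ZW r P Q Z a ->
 [/\ forall k, (k < r)%N -> relk a k,
     forall A (z : gens A P Q), (forall k, (k < r)%N -> relk z k) ->
        exists h : mhom Z A, forall k, (k < r)%N -> app h (a k) = z k
   & forall A (h1 h2 : mhom Z A),
        (forall k, (k < r)%N -> app h1 (a k) = app h2 (a k)) -> meq h1 h2].
Proof.
case: r => // r _; elim: r P Q Z a => [|k IH] P Q Z a.
  move=> [D1 [x [Fx [D0 [e [Fe [O [HO [f [g [i [j [Hg [Hpo Hj]]]]]]]]]]]]]].
  split.
  - case=> // _; rewrite /relk big_geq // -Hj -app_dd -app_mcast.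
    rewrite (mcast_tr (a1:=P) (b1:=Q + 1)); try lia.
    by rewrite -Hg app_mcast -(proj1 Hpo) (HO _ _ (app f x)) !app0 mcast0.
  - move=> A z Hz.
    have [j' [Hj' _]] := Fe A (z 0%N).
    have [h [H1 [H2 _]]] : exists h : mhom Z A,
      (forall p q (x : O p q), app h (app i x) = app (mzero O A) x) /\
      (forall p q (y : D0 p q), app h (app j y) = app j' y) /\
      forall h' : mhom Z A,
        (forall p q (x : O p q), app h' (app i x) = app (mzero O A) x) ->
        (forall p q (y : D0 p q), app h' (app j y) = app j' y) -> meq h' h.
      apply: (proj2 Hpo) => p' q' y.
      have := @free_uniq _ _ _ _ Fx A (mcomp (mzero O A) f) (mcomp j' g).
      apply.
      rewrite !app_comp app_zero Hg app_mcast app_dd Hj'.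
      have := Hz 0%N erefl; rewrite /relk big_geq // => E.
      by rewrite (mcast_tr (a1:=P - 0%:Z) (b1:=Q - 0%:Z + 1)) ?E ?mcast0 //; lia.
    exists h; case=> // _; by rewrite -Hj H2.
  - move=> A h1 h2 E; apply: (po_uniq Hpo).
      by move=> p' q' y; rewrite (HO _ _ y) /app !raddf0.
    move=> p' q' y.
    have := @free_uniq _ _ _ _ Fe A (mcomp h1 j) (mcomp h2 j); apply.
    by rewrite !app_comp Hj E.
move=> [Y [b [HY [Dx [x [Fx [Da [e [Fe [f [g [i [j [Hf [Hg [Hpo [Hi Hj]]]]]]]]]]]]]]]]].
have [IH1 IH2 IH3] := IH _ _ _ _ HY.
split.
- move=> m; rewrite ltnS leq_eqVlt => /orP[/eqP->|Hm].
    rewrite /relk -Hj -app_dd -app_mcast -Hg -(proj1 Hpo) Hf app_sum.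
    apply: eq_big_nat => i0 /andP[i1 i2].
    by rewrite appZ app_mcast app_dd Hi //; lia.
  apply: (relk_map (h := i) (z := b)); last exact: IH1.
  by move=> m' Hm'; apply: Hi; lia.
- move=> A z Hz.
  have [hY HhY] := IH2 A z (fun k Hk => Hz k (ltnW Hk)).
  have [jA [HjA _]] := Fe A (z k.+1).
  have [h [H1 [H2 _]]] : exists h : mhom Z A,
      (forall p q (x : Y p q), app h (app i x) = app hY x) /\
      (forall p q (y : Da p q), app h (app j y) = app jA y) /\
      forall h' : mhom Z A,
        (forall p q (x : Y p q), app h' (app i x) = app hY x) ->
        (forall p q (y : Da p q), app h' (app j y) = app jA y) -> meq h' h.
    apply: (proj2 Hpo) => p' q' y.
    have := @free_uniq _ _ _ _ Fx A (mcomp hY f) (mcomp jA g); apply.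
    rewrite !app_comp Hg app_mcast app_dd HjA (Hz k.+1 (ltnSn _)) Hf app_sum.
    apply: eq_big_nat => i0 /andP[i1 i2].
    by rewrite appZ app_mcast app_dd HhY //; lia.
  exists h => m; rewrite ltnS leq_eqVlt => /orP[/eqP->|Hm].
    by rewrite -Hj H2.
  by rewrite -Hi // H1 HhY.
- move=> A h1 h2 E; apply: (po_uniq Hpo).
    move=> p' q' y.
    have := IH3 A (mcomp h1 i) (mcomp h2 i); apply => m Hm.
    by rewrite !app_comp Hi // E // ltnW.
  move=> p' q' y.
  have := @free_uniq _ _ _ _ Fe A (mcomp h1 j) (mcomp h2 j); apply.
  by rewrite !app_comp Hj E.
Qed.


Lemma ddN A k p q (x : A p q) : dd k (- x) = - dd k x.
Proof. exact: raddfN. Qed.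
Lemma dd0 A k p q : dd k (0 : A p q) = 0.
Proof. exact: raddf0. Qed.
Lemma ddD A k p q (x y : A p q) : dd k (x + y) = dd k x + dd k y.
Proof. exact: raddfD. Qed.

Lemma relk_shift A p q kk (t : gens A p q) : t 0%N = 0 ->
  (forall m, (m < kk.+1)%N -> relk t m) ->
  forall m, (m < kk)%N ->
    relk (fun m => - mcast A (a' := p - 1 - m%:Z) (b' := q - 1 - m%:Z) (t m.+1)) m.
Proof.
move=> t0 Ht m Hm; have H := Ht m.+1 Hm.
rewrite /relk in H *.
rewrite ddN dd_mcast mcastN mcastK; try lia.
rewrite (mcast_tr (a1 := p - (m.+1)%:Z) (b1 := q - (m.+1)%:Z + 1)); try lia.
rewrite H big_nat_recr //= subnn t0 dd0 mcast0 scaler0 addr0 mcast_sum -sumrN.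
apply: eq_big_nat => i /andP[i1 i2].
rewrite ddN dd_mcast mcastN mcastK; try lia.
rewrite mcastZ mcastK; try lia.
rewrite scalerN; congr (- (_ *: _)).
rewrite subSn //; lia.
Qed.

Section XpSec.
Variables (p q : int) (k : nat).
Local Notation P := (p + (k.+2)%:Z - 1).
Local Notation Q := (q + (k.+2)%:Z - 2).

Definition Xp A (y : A p (q - 1)) (w : gens A P Q) (jj : nat) : A (p - jj%:Z) (q - jj%:Z) :=
  mcast A (dd jj y) + (-1) ^+ jj *: \sum_(jj.+1 <= i < k.+2 + jj)
     (-1) ^+ i *: mcast A (dd i (w (k.+2 + jj - 1 - i)%N)).

Lemma app_Xp A B (F : mhom A B) y w jj :
  app F (Xp y w jj) = Xp (app F y) (fun m => app F (w m)) jj.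
Proof.
rewrite /Xp appD appZ app_sum app_mcast app_dd; congr (_ + _ *: _).
by apply: eq_bigr => i _; rewrite appZ app_mcast app_dd.
Qed.

Lemma Xp_ext A y (w w' : gens A P Q) jj :
  (forall m, (m < k.+1)%N -> w m = w' m) -> Xp y w jj = Xp y w' jj.
Proof.
move=> Hw; rewrite /Xp; congr (_ + _ *: _).
by apply: eq_big_nat => i /andP[i1 i2]; rewrite Hw //; lia.
Qed.

Lemma XpR A y (w : gens A P Q) :
  relk (fun m => if (m < k.+1)%N then w m else mcast A (a' := P - m%:Z) (b' := Q - m%:Z) y) k.+1
  <-> Xp y w 0 = 0.
Proof.
set zz := fun m => _.
have E1 : relk zz k.+1 <->
   mcast A (a' := P - (k.+1)%:Z) (b' := Q - (k.+1)%:Z + 1) (dd 0 y) =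
   \sum_(1 <= i < k.+2) (-1) ^+ i.+1 *:
      mcast A (a' := P - (k.+1)%:Z) (b' := Q - (k.+1)%:Z + 1) (dd i (w (k.+1 - i)%N)).
  rewrite /relk /zz ltnn dd_mcast mcastK; try lia.
  have -> : \sum_(1 <= i < k.+2) (-1) ^+ i.+1 *:
      mcast A (a' := P - (k.+1)%:Z) (b' := Q - (k.+1)%:Z + 1) (dd i (zz (k.+1 - i)%N)) =
    \sum_(1 <= i < k.+2) (-1) ^+ i.+1 *:
      mcast A (a' := P - (k.+1)%:Z) (b' := Q - (k.+1)%:Z + 1) (dd i (w (k.+1 - i)%N)).
    apply: eq_big_nat => i /andP[i1 i2]; rewrite /zz.
    by have -> : (k.+1 - i < k.+1)%N by lia.
  by [].
have E2 : mcast A (a' := P - (k.+1)%:Z) (b' := Q - (k.+1)%:Z + 1) (Xp y w 0) =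
   mcast A (a' := P - (k.+1)%:Z) (b' := Q - (k.+1)%:Z + 1) (dd 0 y) +
   \sum_(1 <= i < k.+2) (-1) ^+ i *:
      mcast A (a' := P - (k.+1)%:Z) (b' := Q - (k.+1)%:Z + 1) (dd i (w (k.+1 - i)%N)).
  rewrite /Xp mcastD mcastZ expr0 scale1r mcast_sum mcastK; try lia.
  rewrite addn0; congr (_ + _); apply: eq_big_nat => i /andP[i1 i2].
  rewrite mcastZ mcastK; try lia.
  by have -> : (k.+2 - 1 - i = k.+1 - i)%N by lia.
rewrite E1; split => H.
  have : mcast A (a' := P - (k.+1)%:Z) (b' := Q - (k.+1)%:Z + 1) (Xp y w 0) = 0.
    rewrite E2 H -big_split /=; apply: big1_seq => i _.
    by rewrite exprS mulN1r scaleNr addNr.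
  move/(congr1 (mcast A (a' := p - 0%:Z) (b' := q - 0%:Z))).
  by rewrite mcastK' ?mcast0 //; lia.
apply/eqP; rewrite -subr_eq0; apply/eqP.
rewrite -[RHS](@mcast0 A (p - 0%:Z) (q - 0%:Z) (P - (k.+1)%:Z) (Q - (k.+1)%:Z + 1)).
rewrite -H E2; congr (_ + _); rewrite -sumrN; apply: eq_bigr => i _.
by rewrite exprS mulN1r scaleNr opprK.
Qed.

End XpSec.

End Infra.

Unset Implicit Arguments.
Set Strict Implicit.

Theorem mainTheorem4 (R : comPzRingType) (n : ninf) (hn : ninf_ge2 n)
    (r : nat) (hr : (1 <= r)%N) (p q : int)
    (Z : mcx R n) (a : gens Z p q) (HZ : is_ZW r p q Z a)
    (B : mcx R n) (iota : mhom Z B) (HB : is_BW_iota r p q Z a B iota)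
    (O : mcx R n) (HO : is_zero O) (C : mcx R n)
    (f : mhom Z O) (i : mhom O C) (j : mhom B C)
    (HC : is_pushout f iota i j)
    (Z' : mcx R n) (a' : gens Z' (p + r%:Z - 1) (q + r%:Z - 2))
    (HZ' : is_ZW r (p + r%:Z - 1) (q + r%:Z - 2) Z' a') :
  mcx_iso C Z'.
Proof.
have [Zrel _ Zuniq] := ZW_univ hr HZ.
have [Z'rel Z'ex Z'uniq] := ZW_univ hr HZ'.
have jiota0 : forall p' q' (x : Z p' q'), app j (app iota x) = 0.
  by move=> p' q' x; rewrite -(proj1 HC) (HO _ _ (app f x)) app0.
have kill : forall A (v : mhom B A),
    (forall k, (k < r)%N -> app v (app iota (a k)) = 0) ->
    exists psi : mhom C A, forall p' q' (y : B p' q'), app psi (app j y) = app v y.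
  move=> A v Hv.
  have M : meq (mcomp v iota) (mzero Z A).
    by apply: Zuniq => k Hk; rewrite app_comp app_zero Hv.
  have [h [_ [H2 _]]] := (proj2 HC) A (mzero O A) v
     (fun p' q' x => esym (M p' q' x)).
  by exists h.
have Cuniq : forall A (h1 h2 : mhom C A),
    (forall p' q' (y : B p' q'), app h1 (app j y) = app h2 (app j y)) -> meq h1 h2.
  move=> A h1 h2 E; apply: (po_uniq HC) => // p' q' x.
  by rewrite (HO _ _ x) !app0.
suff [phi [psi [E1 E2]]] : exists (phi : mhom Z' C) (psi : mhom C Z'),
    (forall p' q' (y : B p' q'), app phi (app psi (app j y)) = app j y) /\
    (forall k, (k < r)%N -> app psi (app phi (a' k)) = a' k).
  exists psi, phi; split.
    move=> p' q' x; have := Cuniq C (mcomp phi psi) (mid C) E1 p' q' x.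
    by rewrite app_comp app_id.
  move=> p' q' y; have := Z'uniq Z' (mcomp psi phi) (mid Z') E2 p' q' y.
  by rewrite app_comp app_id.
destruct r as [|[|k]] => //.
-
  move: HB => [e [Fe He]].
  pose z : gens C (p + 1%:Z - 1) (q + 1%:Z - 2) :=
    fun m => mcast C (a' := p + 1%:Z - 1 - m%:Z) (b' := q + 1%:Z - 2 - m%:Z) (app j e).
  have [phi Hphi] : exists phi : mhom Z' C, forall k, (k < 1)%N -> app phi (a' k) = z k.
    apply: Z'ex; case=> // _; rewrite /relk big_geq // /z dd_mcast mcastK; try lia.
    rewrite (mcast_tr (a1 := p - 0%:Z) (b1 := q - 0%:Z)); try lia.
    by rewrite -app_dd -app_mcast -He jiota0 mcast0.
  have [v [Hv _]] := Fe Z' (mcast Z' (a' := p) (b' := q - 1) (a' 0%N)).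
  have [psi Hpsi] : exists psi : mhom C Z', forall p' q' (y : B p' q'), app psi (app j y) = app v y.
    apply: kill; case=> // _.
    rewrite He app_mcast app_dd Hv dd_mcast mcastK; try lia.
    have := Z'rel 0%N erefl; rewrite /relk big_geq // => E.
    by rewrite (mcast_tr (a1 := p + 1%:Z - 1 - 0%:Z) (b1 := q + 1%:Z - 2 - 0%:Z + 1)) ?E ?mcast0 //; lia.
  exists phi, psi; split.
    move=> p' q' y; rewrite Hpsi.
    have := @free_uniq _ _ _ _ _ _ Fe C (mcomp phi v) j; apply.
    by rewrite app_comp Hv app_mcast Hphi // /z mcastK' //; lia.
  case=> // _; rewrite Hphi // /z app_mcast Hpsi Hv mcastK' //; lia.
-
  move: HB => [Zb [bg [HZb [De [e [Fe [Zc [cg [HZc [u1 [u2 [u3 [Hcop Hio]]]]]]]]]]]]].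
  have [Zbrel Zbex Zbuniq] := ZW_univ (ltn0Sn k) HZb.
  have [Zcrel Zcex Zcuniq] := ZW_univ (ltn0Sn k) HZc.
  have Hio' : forall jj, (jj < k.+2)%N -> app iota (a jj) =
      Xp (k := k) (app u2 e) (fun m => app u1 (bg m)) jj +
      match jj with 0%N => 0 | j'.+1 => mcast B (app u3 (cg j')) end := Hio.
  have Fio : forall A (F : mhom B A) jj, (jj < k.+2)%N ->
      app F (app iota (a jj)) =
      Xp (k := k) (app F (app u2 e)) (fun m => app F (app u1 (bg m))) jj +
      match jj with 0%N => 0 | j'.+1 => mcast A (app F (app u3 (cg j'))) end.
    move=> A F jj Hjj; rewrite Hio' // appD app_Xp.
    by case: jj Hjj => [|j'] _; rewrite ?app0 ?app_mcast.
  pose z : gens C (p + (k.+2)%:Z - 1) (q + (k.+2)%:Z - 2) :=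
    fun m => if (m < k.+1)%N then app j (app u1 (bg m))
             else mcast C (a' := p + (k.+2)%:Z - 1 - m%:Z) (b' := q + (k.+2)%:Z - 2 - m%:Z)
                    (app j (app u2 e)).
  have [phi Hphi] : exists phi : mhom Z' C, forall m, (m < k.+2)%N -> app phi (a' m) = z m.
    apply: Z'ex => m; rewrite ltnS leq_eqVlt => /orP[/eqP->|Hm].
      apply/(XpR (k := k) (app j (app u2 e)) (fun m => app j (app u1 (bg m)))).
      by have := Fio C j 0%N erefl; rewrite jiota0 (addr0 (Xp _ _ _)) => <-.
    apply: (relk_map (h := mcomp j u1) (z := bg)); last exact: Zbrel.
    by move=> m' Hm'; rewrite /z app_comp ifT //; apply: leq_ltn_trans Hm.
  have [h1 Hh1] := Zbex Z' a' (fun m Hm => Z'rel m (ltnW Hm)).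
  have [h2 [Hh2 _]] := Fe Z' (mcast Z' (a' := p) (b' := q - 1) (a' k.+1)).
  have [v0 [V01 [V02 [V03 _]]]] := Hcop Z' h1 h2 (mzero Zc Z').
  pose t : gens Z' p q := fun m => app v0 (app iota (a m)).
  have trel : forall m, (m < k.+2)%N -> relk t m.
    move=> m Hm; apply: (relk_map (h := mcomp v0 iota) (z := a)); last exact: Zrel.
    by [].
  have t0 : t 0%N = 0.
    rewrite /t Fio // (addr0 (Xp _ _ _)) V02 Hh2.
    rewrite (@Xp_ext _ _ _ _ _ _ _ _ a'); last by move=> m Hm; rewrite V01 Hh1.
    apply/XpR.
    apply: (relk_map (h := mid Z') (z := a')); last exact: Z'rel.
    move=> m Hm; rewrite app_id; case: ltnP => // Hm'.
    have E : m = k.+1 by lia.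
    by subst m; rewrite mcastK' //; lia.
  pose u : gens Z' (p - 1) (q - 1) :=
    fun m => - mcast Z' (a' := p - 1 - m%:Z) (b' := q - 1 - m%:Z) (t m.+1).
  have [h3 Hh3] := Zcex Z' u (fun m Hm => relk_shift t0 trel Hm).
  have [v [V1 [V2 [V3 _]]]] := Hcop Z' h1 h2 h3.
  have Xeq : forall jj,
      Xp (k := k) (app v (app u2 e)) (fun m => app v (app u1 (bg m))) jj =
      Xp (k := k) (app v0 (app u2 e)) (fun m => app v0 (app u1 (bg m))) jj.
    move=> jj; rewrite V2 V02; apply: Xp_ext => m Hm; by rewrite V1 V01.
  have [psi Hpsi] : exists psi : mhom C Z',
      forall p' q' (y : B p' q'), app psi (app j y) = app v y.
    apply: kill => jj Hjj; rewrite Fio // Xeq.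
    have := Fio Z' v0 jj Hjj; rewrite -/(t jj).
    case: jj Hjj => [|j'] Hjj.
      rewrite (addr0 (Xp _ _ _)).
by rewrite t0 => <-.
    rewrite V03 app_zero mcast0 (addr0 (Xp _ _ _)) => <-.
    by rewrite V3 Hh3 // /u mcastN mcastK' ?addrN //; lia.
  have viota0 : forall p' q' (x : Z p' q'), app v (app iota x) = 0.
    by move=> p' q' x; rewrite -Hpsi jiota0 app0.
  have A1 : forall m, (m < k.+1)%N -> app phi (app v (app u1 (bg m))) = app j (app u1 (bg m)).
    move=> m Hm; rewrite V1 Hh1 // Hphi; last exact: ltnW.
    by rewrite /z Hm.
  have A2 : app phi (app v (app u2 e)) = app j (app u2 e).
    by rewrite V2 Hh2 app_mcast Hphi // /z ltnn mcastK' //; lia.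
  exists phi, psi; split.
    move=> p' q' y; rewrite Hpsi.
    have := @coprod_uniq _ _ _ _ _ _ _ _ _ Hcop C (mcomp phi v) j; apply.
    + move=> p1 q1 x; have := Zbuniq C (mcomp (mcomp phi v) u1) (mcomp j u1); apply.
      by move=> m Hm; rewrite !app_comp A1.
    + move=> p1 q1 x; have := @free_uniq _ _ _ _ _ _ Fe C (mcomp (mcomp phi v) u2) (mcomp j u2).
      by apply; rewrite !app_comp A2.
    + move=> p1 q1 x; have := Zcuniq C (mcomp (mcomp phi v) u3) (mcomp j u3); apply.
      move=> m Hm; rewrite !app_comp.
      have G1 := Fio C (mcomp phi v) m.+1 Hm.
      have G2 := Fio C j m.+1 Hm.
      rewrite app_comp viota0 app0 in G1; rewrite jiota0 in G2.
      have XE : Xp (k := k) (app (mcomp phi v) (app u2 e))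
                   (fun m0 => app (mcomp phi v) (app u1 (bg m0))) m.+1 =
                Xp (k := k) (app j (app u2 e)) (fun m0 => app j (app u1 (bg m0))) m.+1.
        rewrite app_comp A2; apply: Xp_ext => m0 Hm0; by rewrite app_comp A1.
      rewrite XE in G1.
      have := etrans (esym G1) G2; move/addrI.
      move/(congr1 (mcast C (a' := p - 1 - m%:Z) (b' := q - 1 - m%:Z))).
      by rewrite !mcastK' ?app_comp //; lia.
  move=> m Hm; rewrite Hphi // /z; case: ltnP => Hm'.
    by rewrite Hpsi V1 Hh1.
  have E : m = k.+1 by lia.
  subst m; rewrite app_mcast Hpsi V2 Hh2 mcastK' //; lia.
Qed.
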